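(* Let $\mathcal H$ be a separable complex Hilbert space, $A\in L(\mathcal H)^+$ and $\mathcal S$ a closed subspace such that $(A,\mathcal S)$ is compatible, and let $\mathcal N=\mathcal S\cap N(A)$. Then $$\Pi(A,\mathcal S)=P_{A,\mathcal S}+L(\mathcal H,\mathcal N)=\{P_{A,\mathcal S}+W:\ W\in L(\mathcal H),\ R(W)\subseteq\mathcal N\}.$$
   Context: $(A,\mathcal S)$ is compatible if there exists $Q\in L(\mathcal H)$ with $Q^2=Q$, $R(Q)=\mathcal S$, $AQ=Q^*A$. In that case $P_{A,\mathcal S}$ denotes the unique (bounded) oblique projection with range $\mathcal S$ and nullspace $A(\mathcal S)^\perp\cap\mathcal N^\perp$; it satisfies $AP_{A,\mathcal S}=P_{A,\mathcal S}^*A$. $\Pi(A,\mathcal S)$ is the set of $A$-projections into $\mathcal S$: operators $T\in L(\mathcal H)$ with $R(T)\subseteq\mathcal S$ and $\|y-Ty\|_A\le\|y-s\|_A$ for all $y\in\mathcal H$, $s\in\mathcal S$, where $\|z\|_A=\langle Az,z\rangle^{1/2}$. *)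

(* Defs.v *)
From mathcomp Require Import all_boot all_algebra.
From mathcomp Require Import boolp classical_sets reals.
From mathcomp.real_closed Require Import complex.
Set Implicit Arguments. Unset Strict Implicit. Unset Printing Implicit Defensive.
Import GRing.Theory Num.Theory.
Local Open Scope ring_scope.
Local Open Scope classical_set_scope.

Section Hilbert.
Variables (R : realType) (H : lmodType R[i]) (ip : H -> H -> R[i]).

Definition inner_product : Prop :=
  [/\ (forall (a : R[i]) (x y z : H), ip (a *: x + y) z = a * ip x z + ip y z),
      (forall x y : H, ip y x = (ip x y)^*),
      (forall x : H, 0 <= ip x x) &
      (forall x : H, ip x x = 0 -> x = 0)].

Definition hnorm (x : H) : R := Num.sqrt (complex.Re (ip x x)).

Definition hconverges (u : nat -> H) (l : H) : Prop :=
  forall e : R, 0 < e -> exists N : nat, forall n : nat, (N <= n)%N -> hnorm (u n - l) < e.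

Definition hcauchy (u : nat -> H) : Prop :=
  forall e : R, 0 < e -> exists N : nat,
    forall m n : nat, (N <= m)%N -> (N <= n)%N -> hnorm (u m - u n) < e.

Definition hcomplete : Prop :=
  forall u : nat -> H, hcauchy u -> exists l : H, hconverges u l.

Definition hseparable : Prop :=
  exists d : nat -> H, forall (x : H) (e : R), 0 < e -> exists n : nat, hnorm (x - d n) < e.

Definition separable_complex_Hilbert_space : Prop :=
  [/\ inner_product, hcomplete & hseparable].

Definition bounded_op (T : H -> H) : Prop :=
  (forall (a : R[i]) (x y : H), T (a *: x + y) = a *: T x + T y) /\
  exists M : R, forall x : H, hnorm (T x) <= M * hnorm x.

Definition is_adjoint (T Ts : H -> H) : Prop :=
  forall x y : H, ip (T x) y = ip x (Ts y).

Definition positive_op (A : H -> H) : Prop :=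
  bounded_op A /\ forall x : H, 0 <= ip (A x) x.

Definition closed_subspace (S : set H) : Prop :=
  [/\ S 0,
      (forall (a : R[i]) (x y : H), S x -> S y -> S (a *: x + y)) &
      (forall (u : nat -> H) (l : H), (forall n, S (u n)) -> hconverges u l -> S l)].

Definition kernel (T : H -> H) : set H := [set x | T x = 0].

Definition orth (M : set H) : set H := [set y | forall m, M m -> ip y m = 0].

Definition compatible (A : H -> H) (S : set H) : Prop :=
  exists Q : H -> H, [/\ bounded_op Q, (forall x, Q (Q x) = Q x), range Q = S &
    exists Qs : H -> H, [/\ bounded_op Qs, is_adjoint Q Qs & forall x, A (Q x) = Qs (A x)]].

Definition is_P_AS (A : H -> H) (S : set H) (P : H -> H) : Prop :=
  [/\ bounded_op P, (forall x, P (P x) = P x), range P = S &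
      kernel P = orth (A @` S) `&` orth (S `&` kernel A)].

Definition Anorm (A : H -> H) (z : H) : R := Num.sqrt (complex.Re (ip (A z) z)).

Definition A_projections (A : H -> H) (S : set H) : set (H -> H) :=
  [set T | [/\ bounded_op T, (forall y, S (T y)) &
     forall y s : H, S s -> Anorm A (y - T y) <= Anorm A (y - s)]].

End Hilbert.

(* Main.v *)
Require Import Defs.
From mathcomp Require Import all_boot all_algebra.
From mathcomp Require Import boolp classical_sets reals.
From mathcomp.real_closed Require Import complex.
From mathcomp Require Import all_order ring lra.
Import Order.TTheory GRing.Theory Num.Theory.
Local Open Scope ring_scope.
Local Open Scope complex_scope.
Local Open Scope ring_scope.
Local Open Scope classical_set_scope.

Lemma conjE (R : realType) (a b : R) : Num.conj (a +i* b)%C = (a +i* (-b))%C.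
Proof. reflexivity. Qed.

Lemma disc (R : realType) (a b c : R) : 0 <= b ->
  (forall t, 0 <= a + 2 * t * c + t ^+ 2 * b) -> c ^+ 2 <= a * b.
Proof.
move=> hb ht; have [b0|bpos] := eqVneq b 0.
  subst b; have [c0|cn0] := eqVneq c 0; first by subst c; lra.
  have := ht (- (a + 1) / (2 * c)).
  have -> : 2 * (- (a + 1) / (2 * c)) * c = - (a + 1) by field; rewrite cn0 /=.
  lra.
have bp : 0 < b by rewrite lt0r bpos hb.
have := ht (- c / b) => h.
have e : b * (a + 2 * (- c / b) * c + (- c / b) ^+ 2 * b) = a * b - c ^+ 2.
  by field; rewrite bpos.
have : 0 <= b * (a + 2 * (- c / b) * c + (- c / b) ^+ 2 * b) by apply: mulr_ge0.
rewrite e; lra.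
Qed.

Set Default Proof Using "All".
Section Form.
Variables (R : realType) (H : lmodType R[i]) (f : H -> H -> R[i]).
Hypothesis Hlin : forall (a : R[i]) (x y z : H), f (a *: x + y) z = a * f x z + f y z.
Hypothesis Hherm : forall x y : H, f y x = Num.conj (f x y).
Hypothesis Hpos : forall x, 0 <= f x x.

Lemma f0l z : f 0 z = 0.
Proof.
have := Hlin 1 0 0 z; rewrite scaler0 addr0 mul1r => h.
by have := congr1 (fun t => t - f 0 z) h; rewrite subrr addrK.
Qed.
Lemma fDl x y z : f (x + y) z = f x z + f y z.
Proof. by have := Hlin 1 x y z; rewrite scale1r mul1r. Qed.
Lemma fZl a x z : f (a *: x) z = a * f x z.
Proof. by have := Hlin a x 0 z; rewrite !addr0 f0l addr0. Qed.
Lemma fDr z x y : f z (x + y) = f z x + f z y.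
Proof. by rewrite Hherm fDl rmorphD [f z x]Hherm [f z y]Hherm. Qed.
Lemma fZr z a x : f z (a *: x) = Num.conj a * f z x.
Proof. by rewrite Hherm fZl rmorphM [f z x]Hherm. Qed.
Lemma fNl x z : f (- x) z = - f x z.
Proof. by rewrite -scaleN1r fZl mulN1r. Qed.
Lemma fNr z x : f z (- x) = - f z x.
Proof. by rewrite Hherm fNl rmorphN [f z x]Hherm. Qed.

Lemma fpos x : complex.Im (f x x) = 0 /\ 0 <= complex.Re (f x x).
Proof. by move: (Hpos x); case: (f x x) => a b; rewrite lecE /= => /andP[/eqP -> ->]. Qed.

Lemma quad (r : R) x y : complex.Re (f (x + r%:C *: y) (x + r%:C *: y)) =
  complex.Re (f x x) + 2 * r * complex.Re (f x y) + r ^+ 2 * complex.Re (f y y).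
Proof.
rewrite !fDl !fDr !fZl !fZr [f y x]Hherm.
move: (f x x) (f x y) (f y y) => [a b] [c d] [e g]. rewrite /=; ring.
Qed.

Lemma quadD x y : complex.Re (f (x + y) (x + y)) =
  complex.Re (f x x) + 2 * complex.Re (f x y) + complex.Re (f y y).
Proof. have e1 : (1 : R)%:C *: y = y by rewrite scale1r. by have := quad 1 x y; rewrite e1 => ->; ring. Qed.

Lemma CS x y : complex.Re (f x y) ^+ 2 <= complex.Re (f x x) * complex.Re (f y y).
Proof.
apply: disc; first by case: (fpos y).
by move=> t; rewrite -quad; case: (fpos (x + t%:C *: y)).
Qed.
End Form.

Lemma polar (R : realType) (H : lmodType R[i]) (g : H -> H -> R[i])
 (gDl : forall x y z, g (x + y) z = g x z + g y z)
 (gZl : forall a x z, g (a *: x) z = a * g x z)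
 (gDr : forall z x y, g z (x + y) = g z x + g z y)
 (gZr : forall z a x, g z (a *: x) = Num.conj a * g z x)
 (greal : forall x, complex.Im (g x x) = 0) x y : g y x = Num.conj (g x y).
Proof.
have h1 := greal (x + y); have h2 := greal (x + 'i%C *: y).
rewrite !gDl !gDr in h1. rewrite !gDl !gDr !gZl !gZr in h2.
have hx := greal x; have hy := greal y.
move: h1 h2 hx hy; move: (g x x) (g x y) (g y x) (g y y) => [a b] [c d] [e k] [p q] /=.
move=> h1 h2 hx hy; rewrite conjE; apply/eqP; rewrite eq_complex /=.
apply/andP; split; apply/eqP; lra.
Qed.

Section IP.
Variables (R : realType) (H : lmodType R[i]) (ip : H -> H -> R[i]).
Hypothesis hip : inner_product ip.

Let ilin : forall (a : R[i]) (x y z : H), ip (a *: x + y) z = a * ip x z + ip y z.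
Proof. by case: hip. Qed.
Let iherm : forall x y : H, ip y x = Num.conj (ip x y).
Proof. by case: hip. Qed.
Let ipos : forall x, 0 <= ip x x.
Proof. by case: hip. Qed.

Lemma hnorm_ge0 x : 0 <= hnorm ip x.
Proof. exact: sqrtr_ge0. Qed.

Lemma hnormN x : hnorm ip (- x) = hnorm ip x.
Proof. by rewrite /hnorm (@fNl _ _ _ ilin iherm ipos) (@fNr _ _ _ ilin iherm ipos) opprK. Qed.

Lemma hnormD x y : hnorm ip (x + y) <= hnorm ip x + hnorm ip y.
Proof.
have [_ px] := @fpos _ _ _ ilin iherm ipos x; have [_ py] := @fpos _ _ _ ilin iherm ipos y.
have cs := @CS _ _ _ ilin iherm ipos x y.
set a := complex.Re (ip x x) in px cs *; set b := complex.Re (ip y y) in py cs *.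
set c := complex.Re (ip x y) in cs.
have hc : c <= Num.sqrt a * Num.sqrt b.
  apply: le_trans (ler_norm c) _; rewrite -sqrtr_sqr -sqrtrM //; exact: ler_wsqrtr.
rewrite /hnorm (@quadD _ _ _ ilin iherm ipos) -/a -/b -/c.
have e : Num.sqrt a + Num.sqrt b = Num.sqrt ((Num.sqrt a + Num.sqrt b) ^+ 2).
  by rewrite sqrtr_sqr ger0_norm // addr_ge0 // sqrtr_ge0.
rewrite e; apply: ler_wsqrtr.
have ea := sqr_sqrtr px; have eb := sqr_sqrtr py.
have := sqrtr_ge0 a; have := sqrtr_ge0 b.
move: (Num.sqrt a) (Num.sqrt b) ea eb hc => sa sb ea eb hc ha hb.
nra.
Qed.

Lemma bounded_add (T W : H -> H) : bounded_op ip T -> bounded_op ip W ->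
  bounded_op ip (fun x => T x + W x).
Proof.
move=> [lT [M1 hM1]] [lW [M2 hM2]]; split.
  by move=> a x y; rewrite lT lW scalerDr addrACA.
exists (M1 + M2) => x; apply: le_trans (hnormD _ _) _.
by rewrite mulrDl lerD.
Qed.

Lemma bounded_sub (T W : H -> H) : bounded_op ip T -> bounded_op ip W ->
  bounded_op ip (fun x => T x - W x).
Proof.
move=> [lT [M1 hM1]] [lW [M2 hM2]]; split.
  by move=> a x y; rewrite lT lW scalerBr opprD addrACA.
exists (M1 + M2) => x; apply: le_trans (hnormD _ _) _.
by rewrite hnormN mulrDl lerD.
Qed.

End IP.

Theorem mainTheorem8 (R : realType) (H : lmodType R[i]) (ip : H -> H -> R[i])
  (hH : separable_complex_Hilbert_space ip)
  (A : H -> H) (hA : positive_op ip A)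
  (S : set H) (hS : closed_subspace ip S) (hcomp : compatible ip A S)
  (P : H -> H) (hP : is_P_AS ip A S P) :
  A_projections ip A S =
  [set T | exists W : H -> H, [/\ bounded_op ip W, (forall x, (S `&` kernel A) (W x)) &
                                  T = (fun x => P x + W x)]].
Proof.
case: hH => hip _ _.
have ilin : forall (a : R[i]) (x y z : H), ip (a *: x + y) z = a * ip x z + ip y z.
  by case: hip.
have iherm : forall x y : H, ip y x = Num.conj (ip x y) by case: hip.
have ipos : forall x, 0 <= ip x x by case: hip.
have idef : forall x, ip x x = 0 -> x = 0 by case: hip.
case: (hA) => [[Alin _] Apos].
have A0 : A 0 = 0.
  have := Alin 1 0 0; rewrite scaler0 addr0 scale1r => h.
  by have := congr1 (fun t => t - A 0) h; rewrite subrr addrK.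
have AZ a x : A (a *: x) = a *: A x by have := Alin a x 0; rewrite !addr0 A0 addr0.
have AN x : A (- x) = - A x by rewrite -scaleN1r AZ scaleN1r.
pose g := fun x y => ip (A x) y.
have glin : forall (a : R[i]) x y z, g (a *: x + y) z = a * g x z + g y z.
  by move=> a x y z; rewrite /g Alin ilin.
have gDl x y z : g (x + y) z = g x z + g y z.
  by have := glin 1 x y z; rewrite scale1r mul1r.
have gZl a x z : g (a *: x) z = a * g x z.
  by rewrite /g AZ (@fZl _ _ _ ilin iherm ipos).
have gDr z x y : g z (x + y) = g z x + g z y.
  by rewrite /g (@fDr _ _ _ ilin iherm ipos).
have gZr z a x : g z (a *: x) = Num.conj a * g z x.
  by rewrite /g (@fZr _ _ _ ilin iherm ipos).
have greal x : complex.Im (g x x) = 0.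
  by move: (Apos x); rewrite /g; case: (ip (A x) x) => a b; rewrite lecE /= => /andP[/eqP -> _].
have gherm := @polar _ _ g gDl gZl gDr gZr greal.
have gpos : forall x, 0 <= g x x by move=> x; exact: Apos.
have gRe x : 0 <= complex.Re (g x x) by case: (@fpos _ _ _ glin gherm gpos x).
have Asym x y : ip (A x) y = ip x (A y).
  by rewrite [RHS]iherm; exact: (gherm y x).
case: (hP) => [Pb PP PR Pker]; case: (Pb) => Plin _.
have P0 : P 0 = 0.
  have := Plin 1 0 0; rewrite scaler0 addr0 scale1r => h.
  by have := congr1 (fun t => t - P 0) h; rewrite subrr addrK.
have PB x y : P (x - y) = P x - P y.
  by have := Plin (-1) y x; rewrite !scaleN1r addrC [- P y + _]addrC.
case: hS => S0 Slin _.
have SD x y : S x -> S y -> S (x + y) by move=> hx hy; have := Slin 1 x y hx hy; rewrite scale1r.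
have SN x : S x -> S (- x) by move=> hx; have := Slin (-1) x 0 hx S0; rewrite addr0 scaleN1r.
have SB x y : S x -> S y -> S (x - y) by move=> hx hy; apply: SD => //; exact: SN.
have PS y : S (P y) by rewrite -PR; exists y.
have uorth y s : S s -> g (y - P y) s = 0.
  move=> Ss; have hk : kernel P (y - P y) by rewrite /kernel /= PB PP subrr.
  rewrite Pker in hk; case: hk => h1 _.
  rewrite /g Asym; apply: h1; by exists s.
have pyth y v : S v -> complex.Re (g (y - P y + v) (y - P y + v)) =
    complex.Re (g (y - P y) (y - P y)) + complex.Re (g v v).
  by move=> Sv; rewrite (@quadD _ _ _ glin gherm gpos) (uorth y v Sv) /= mulr0 addr0.
rewrite /A_projections; apply/seteqP; split => T /=.
- case=> Tb TS Tmin; exists (fun x => T x - P x); split.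
  + exact: (@bounded_sub _ _ _ hip _ _ Tb Pb).
  + move=> x; split; first exact: SB.
    pose v := P x - T x.
    have Sv : S v by exact: SB.
    have key : complex.Re (g v v) = 0.
      have h := Tmin x (P x) (PS x); rewrite /Anorm in h.
      have e : x - T x = x - P x + v by rewrite /v addrA subrK.
      rewrite e -/(g _ _) (pyth x v Sv) ler_sqrt in h; last exact: gRe.
      have := gRe v; lra.
    have Av : A v = 0.
      have := @CS _ _ _ glin gherm gpos v (A v); rewrite key mul0r => hc.
      have c0 : complex.Re (ip (A v) (A v)) = 0.
        have := sqr_ge0 (complex.Re (g v (A v))); rewrite /g; nra.
      apply: idef; move: (ipos (A v)) c0; case: (ip (A v) (A v)) => a b.
      by rewrite lecE /= => /andP[/eqP -> _] ->.
    by rewrite /kernel /= -opprB AN -/v Av oppr0.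
  + by apply/funext => x /=; rewrite addrC subrK.
- case=> W [Wb WN ->]; split.
  + exact: (@bounded_add _ _ _ hip _ _ Pb Wb).
  + by move=> y; apply: SD => //; case: (WN y).
  + move=> y s Ss; rewrite /Anorm.
    have e1 : y - (P y + W y) = y - P y + (- W y) by rewrite opprD addrA.
    have e2 : y - s = y - P y + (P y - s) by rewrite addrA subrK.
    case: (WN y) => SW AW.
    rewrite e1 e2 -!/(g _ _) !pyth //; last by exact: SN.
    have -> : g (- W y) (- W y) = 0.
      by rewrite /g AN AW oppr0 (@f0l _ _ _ ilin iherm ipos).
    apply: ler_wsqrtr; have := gRe (P y - s); rewrite /=; lra.
exact: SB.
Qed.
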